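(* Let $\mathcal{N}>0$ be real, let $n\ge 0$ be an integer, and put $N=\mathcal{N}+\tfrac12-n$. Then the Cari\~{n}ena polynomial $\mathcal{H}_n^{\mathcal{N}}$ and the relativistic Hermite polynomial $H_n^{N}$ satisfy \[ \mathcal{H}_{n}^{\mathcal{N}}(X)=\left(\frac{N}{\mathcal{N}}\right)^{\frac{n}{2}}H_{n}^{N}\!\left(X\sqrt{\frac{N}{\mathcal{N}}}\right). \]
   Context: For a real parameter $N\neq 0$ and an integer $n\ge0$, the relativistic Hermite polynomial of degree $n$ is defined by the Rodrigues formula \[ H_n^N(X)=(-1)^n\left(1+\frac{X^2}{N}\right)^{N+n}\frac{d^n}{dX^n}\left(1+\frac{X^2}{N}\right)^{-N}; \] the right-hand side is a polynomial in $X$ (e.g. $H_0^N=1$, $H_1^N=2X$, $H_2^N=2(-1+X^2(2+\frac1N))$). For a real parameter $\mathcal{N}>0$ and integer $n\ge0$, the Cari\~{n}ena polynomial of degree $n$ is defined by \[ \mathcal{H}_n^{\mathcal{N}}(X)=(-1)^n\left(1+\frac{X^2}{\mathcal{N}}\right)^{\mathcal{N}+\frac12}\frac{d^n}{dX^n}\left(1+\frac{X^2}{\mathcal{N}}\right)^{n-\mathcal{N}-\frac12},\qquad X\in\mathbb{R}. \] Both sides of the claimed identity are regarded as polynomials in $X$. *)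

(* Defs.v *)
From HB Require Import structures.
From mathcomp Require Import all_boot all_order all_algebra.
From mathcomp Require Import all_classical all_reals all_analysis.
From mathcomp Require Import complex.
Set Implicit Arguments. Unset Strict Implicit. Unset Printing Implicit Defensive.
Import Order.TTheory GRing.Theory Num.Theory.
Local Open Scope ring_scope.

Section Defs.
Variable R : realType.

Definition relHermite_fun (n : nat) (N : R) (X : R) : R :=
  (-1) ^+ n * (1 + X ^+ 2 / N) `^ (N + n%:R)
  * derive1n n (fun x : R => (1 + x ^+ 2 / N) `^ (- N)) X.

(* Defaults to 0 if no such polynomial. *)
Definition relHermite (n : nat) (N : R) : {poly R} :=
  xget 0 [set p : {poly R} | forall X : R, 0 < 1 + X ^+ 2 / N ->
                              p.[X] = relHermite_fun n N X].

Definition carinena_fun (n : nat) (NN : R) (X : R) : R :=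
  (-1) ^+ n * (1 + X ^+ 2 / NN) `^ (NN + 2^-1)
  * derive1n n (fun x : R => (1 + x ^+ 2 / NN) `^ (n%:R - NN - 2^-1)) X.

Definition carinena (n : nat) (NN : R) : {poly R} :=
  xget 0 [set p : {poly R} | forall X : R, p.[X] = carinena_fun n NN X].

End Defs.

(* Main.v *)
Require Import Defs.
From HB Require Import structures.
From mathcomp Require Import all_boot all_order all_algebra.
From mathcomp Require Import all_classical all_reals all_analysis.
From mathcomp Require Import complex.
From mathcomp Require Import ring lra.
Import Order.TTheory GRing.Theory Num.Theory.
Local Open Scope ring_scope.

Fixpoint Qp (F : comNzRingType) (U : {poly F}) (a : F) (k : nat) : {poly F} :=
  match k with
  | 0 => 1
  | k'.+1 => let q := @Qp F U a k' in q^`() * U + (a - k'%:R) *: (q * U^`())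
  end.
Arguments Qp {F} U a k.
Lemma Qp_map (F G : comNzRingType) (f : {rmorphism F -> G}) U a k :
  map_poly f (Qp U a k) = Qp (map_poly f U) (f a) k.
Proof.
elim: k => [|k IH] /=; first by rewrite rmorph1.
rewrite rmorphD rmorphM /= linearZ /= rmorphM /= !deriv_map IH.
by rewrite rmorphB rmorph_nat -deriv_map IH.
Qed.

Lemma Qp_scale (F : comNzRingType) (U : {poly F}) a s k :
  Qp (U \Po (s *: 'X)) a k = s ^+ k *: (Qp U a k \Po (s *: 'X)).
Proof.
elim: k => [|k IH] /=; first by rewrite comp_polyC expr0 scale1r.
rewrite IH !derivZ !deriv_comp derivZ derivX.
rewrite comp_polyD comp_polyM comp_polyZ comp_polyM.
rewrite -!scalerAl -!scalerAr !scalerA scalerDr !scalerA.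
rewrite -!mul_polyC; rewrite !mulrA exprS.
by rewrite !polyCM; ring.
Qed.
Lemma poly_eq_ball (R : realFieldType) (p q : {poly R}) r : 0 < r ->
  (forall X, `|X| <= r -> p.[X] = q.[X]) -> p = q.
Proof.
move=> r0 H; apply/eqP; rewrite -subr_eq0; apply/negPn/negP => d0.
set d := p - q in d0.
pose xs := [seq r / (i.+1)%:R | i <- iota 0 (size d)].
have : (size xs < size d)%N.
  apply: max_poly_roots => //.
    apply/allP => x /mapP [i _ ->]; rewrite /root /d hornerD hornerN H ?subrr //.
    rewrite normrM normfV (ger0_norm (ltW r0)) ger0_norm //.
    by rewrite ler_pdivrMr ?ltr0Sn // ler_peMr ?(ltW r0) // ler1n.
  rewrite map_inj_uniq ?iota_uniq // => i j /(mulfI (lt0r_neq0 r0)) /invr_inj.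
  by move/eqP; rewrite eqr_nat eqSS => /eqP.
by rewrite size_map size_iota ltnn.
Qed.

Lemma dom_ok (R : realFieldType) (N X : R) : N != 0 ->
  `|X| <= `|N| / (`|N| + 1) -> 0 < 1 + X ^+ 2 / N.
Proof.
move=> N0 HX.
set m := `|N| in HX.
have m0 : 0 < m by rewrite normr_gt0.
set r := m / (m + 1) in HX.
have r0 : 0 < r by rewrite divr_gt0 // ltr_wpDr.
have r1 : r < 1 by rewrite ltr_pdivrMr ?mul1r ?ltrDl // ltr_wpDr.
have rm : r < m by rewrite ltr_pdivrMr ?ltr_wpDr // ; nra.
have X2 : X ^+ 2 < m.
  move: HX; rewrite ler_norml => /andP [h1 h2]; nra.
have : `|X ^+ 2 / N| < 1.
  rewrite normrM normfV ger0_norm ?sqr_ge0 // -/m ltr_pdivrMr //; lra.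
rewrite ltr_norml => /andP [h _]; lra.
Qed.
Lemma derQ (R : realType) (U : {poly R}) a k x : 0 < U.[x] ->
  derive1n k (fun y => U.[y] `^ a) x = (Qp U a k).[x] * U.[x] `^ (a - k%:R).
Proof.
elim: k x => [|k IH] x Ux.
  by rewrite derive1n0 /= hornerE mul1r subr0.
rewrite derive1nS derive1E.
rewrite (@near_eq_derive _ _ _ _ (horner (Qp U a k) * ((fun z : R => z `^ (a - k%:R)) \o horner U))); last first.
  near=> y; rewrite IH //=; near: y.
  by apply: cvgr_gt Ux; apply: continuous_horner.
have dU : derivable (horner U) x 1 by exact: derivable_horner.
have dP : derivable (fun z : R => z `^ (a - k%:R)) (U.[x]) 1.
  by apply: derivable_powR; rewrite in_itv /= Ux.
have dC : derivable ((fun z : R => z `^ (a - k%:R)) \o horner U) x 1.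
  by apply/derivable1_diffP; apply: differentiable_comp; apply/derivable1_diffP.
have dQ : derivable (horner (Qp U a k)) x 1 by exact: derivable_horner.
have := deriveM dQ dC.
move=> ->.
rewrite -!derive1E (derive1_comp dU dP) powR_derive1; last by rewrite in_itv /= Ux.
rewrite !derive1E !derive_val /=.
have E : U.[x] `^ (a - k%:R) = U.[x] `^ (a - k%:R - 1) * U.[x].
  rewrite -[X in _ = _ * X](powRr1 (ltW Ux)) -powRD; first by rewrite subrK.
  by rewrite (gt_eqF Ux) implybT.
rewrite E -natr1 opprD addrA !hornerE /=.
rewrite /GRing.scale /=; ring.
Unshelve. all: end_near. Qed.

Lemma carinena_eq (R : realType) (NN : R) (n : nat) : 0 < NN ->
  carinena n NN = (-1) ^+ n *: Qp (1 + NN^-1 *: 'X^2) (n%:R - NN - 2^-1) n.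
Proof.
move=> NN0.
set U := 1 + NN^-1 *: 'X^2.
have HU : forall x, U.[x] = 1 + x ^+ 2 / NN.
  by move=> x; rewrite /U !hornerE /=; ring.
have Upos : forall x, 0 < U.[x].
  by move=> x; rewrite HU ltr_wpDr // divr_ge0 ?sqr_ge0 ?ltW.
have P : forall X, ((-1) ^+ n *: Qp U (n%:R - NN - 2^-1) n).[X] = carinena_fun n NN X.
  move=> X; rewrite /carinena_fun.
  have -> : (fun x : R => (1 + x ^+ 2 / NN) `^ (n%:R - NN - 2^-1)) =
            (fun x => U.[x] `^ (n%:R - NN - 2^-1)) by apply: funext => x; rewrite HU.
  rewrite derQ // -HU hornerZ.
  have -> : n%:R - NN - 2^-1 - n%:R = - (NN + 2^-1) by ring.
  have h : U.[X] `^ (NN + 2^-1) != 0 by rewrite gt_eqF // powR_gt0.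
  rewrite powRN; field; exact: h.
rewrite /carinena; apply: xget_unique => [|y Hy]; first exact: P.
apply: (@poly_eq_ball _ _ _ 1) => // X _.
by rewrite Hy P.
Qed.

Lemma relHermite_eq (R : realType) (N : R) (n : nat) : N != 0 ->
  relHermite n N = (-1) ^+ n *: Qp (1 + N^-1 *: 'X^2) (- N) n.
Proof.
move=> N0.
set U := 1 + N^-1 *: 'X^2.
have HU : forall x, U.[x] = 1 + x ^+ 2 / N.
  by move=> x; rewrite /U !hornerE /=; ring.
have P : forall X, 0 < 1 + X ^+ 2 / N ->
    ((-1) ^+ n *: Qp U (- N) n).[X] = relHermite_fun n N X.
  move=> X HX; rewrite /relHermite_fun.
  have -> : (fun x : R => (1 + x ^+ 2 / N) `^ (- N)) =
            (fun x => U.[x] `^ (- N)) by apply: funext => x; rewrite HU.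
  rewrite derQ ?HU // hornerZ.
  have -> : - N - n%:R = - (N + n%:R) by ring.
  have h : (1 + X ^+ 2 / N) `^ (N + n%:R) != 0 by rewrite gt_eqF // powR_gt0.
  rewrite powRN; field; exact: h.
rewrite /relHermite; apply: xget_unique => [|y Hy]; first exact: P.
apply: (@poly_eq_ball _ _ _ (`|N| / (`|N| + 1))) => [|X HX].
  by rewrite divr_gt0 ?normr_gt0 // ltr_wpDl.
have D := @dom_ok R N X N0 HX.
by rewrite Hy // P.
Qed.

Local Open Scope complex_scope.

Theorem theorem1 (R : realType) (NN : R) (n : nat) :
  0 < NN ->
  let N := NN + 2^-1 - n%:R in
  N != 0 ->
  let s : R[i] := sqrtc ((N / NN)%:C) in
  map_poly (fun x : R => x%:C) (carinena n NN) =
  s ^+ n *: ((map_poly (fun x : R => x%:C) (relHermite n N)) \Po (s *: 'X)).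
Proof.
move=> NN0 N N0 s.
rewrite carinena_eq // relHermite_eq //.
have -> : n%:R - NN - 2^-1 = - N by rewrite /N; ring.
rewrite !map_polyZ /= !Qp_map.
set f := (fun x : R => x%:C).
have Hs : s ^+ 2 = f (N / NN) by rewrite sqr_sqrtc.
have -> : map_poly f (1 + NN^-1 *: 'X^2) =
          map_poly f (1 + N^-1 *: 'X^2) \Po (s *: 'X).
  rewrite !rmorphD !rmorph1 /= !map_polyZ /= map_polyXn.
  rewrite ?comp_polyD ?comp_polyC comp_polyZ.
  rewrite (_ : 'X^2 \Po (s *: 'X) = (s *: 'X)^+2); last by rewrite !expr2 comp_polyM comp_polyX.
  rewrite exprZn scalerA Hs -rmorphM /=.
  congr (1 + (_%:C) *: _); by rewrite mulrA mulVf ?mul1r.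
rewrite Qp_scale comp_polyZ !scalerA mulrC.
done.
Qed.
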